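(* Let $G$ be a graph on vertex set $[n]$ and $r\ge1$ an integer, and suppose that no vertex of $G$ has more than one cycle in its $r$-neighborhood. Define the relation $i\sim j$ iff there is a cycle contained in the intersection of the $r$-neighborhoods of $i$ and $j$, and let $B=A^{[r]}-A^{\{r\}}$. Then for all $i,j\in[n]$: (i) $B_{ij}\ne0$ implies $i\sim j$; (ii) $B_{ij}\ne0$ implies there are at least two paths of length $\le r$ from $i$ to $j$; (iii) $|B_{ij}|\le 1$; (iv) there are at most two paths of length $\le r$ from $i$ to $j$.
   Context: The $r$-neighborhood of a vertex $v$ is the subgraph of $G$ induced by vertices at graph distance at most $r$ from $v$. $A^{[r]}$ is the $r$-distance matrix: $A^{[r]}_{ij}=1$ if $d_G(i,j)=r$ and $0$ otherwise. $A^{\{r\}}$ is the length-$r$ self-avoiding-walk matrix: $A^{\{r\}}_{ij}$ is the number of self-avoiding walks (paths) of length exactly $r$ between $i$ and $j$. *)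

(* Defs.v *)
From mathcomp Require Import all_boot all_order all_algebra.
Set Implicit Arguments. Unset Strict Implicit. Unset Printing Implicit Defensive.
Import GRing.Theory Num.Theory.

Definition simple_graph n (adj : rel 'I_n) : Prop :=
  symmetric adj /\ irreflexive adj.

Definition walk_len n (adj : rel 'I_n) (i j : 'I_n) (k : nat) : bool :=
  [exists t : k.-tuple 'I_n, path adj i t && (last i t == j)].

(* graph distance d_G(i,j) = r (false if i, j are in different components) *)
Definition dist_eq n (adj : rel 'I_n) (i j : 'I_n) (r : nat) : bool :=
  walk_len adj i j r && [forall k : 'I_r, ~~ walk_len adj i j k].

Definition dist_le n (adj : rel 'I_n) (i j : 'I_n) (r : nat) : bool :=
  [exists k : 'I_r.+1, walk_len adj i j k].

(* r-ball around v: vertex set of the r-neighborhood (an induced subgraph) *)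
Definition ball n (adj : rel 'I_n) (v : 'I_n) (r : nat) : {set 'I_n} :=
  [set u | dist_le adj v u r].

Definition npaths n (adj : rel 'I_n) (i j : 'I_n) (k : nat) : nat :=
  #|[set t : k.-tuple 'I_n | [&& path adj i t, last i t == j & uniq (i :: t)]]|.

Definition npaths_le n (adj : rel 'I_n) (i j : 'I_n) (r : nat) : nat :=
  \sum_(k < r.+1) npaths adj i j k.

Definition distmx n (adj : rel 'I_n) (r : nat) : 'M[int]_n :=
  \matrix_(i, j) (dist_eq adj i j r)%:R%R.

Definition sawmx n (adj : rel 'I_n) (r : nat) : 'M[int]_n :=
  \matrix_(i, j) (npaths adj i j r)%:R%R.

Definition cycle_seq n (adj : rel 'I_n) (s : seq 'I_n) : bool :=
  [&& 3 <= size s, uniq s & cycle adj s].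

(* The cycle as a subgraph: its edge set (edges as 2-element vertex sets).
   Two cyclic sequences denote the same cycle iff they have the same edges. *)
Definition cycle_edges n (s : seq 'I_n) : {set {set 'I_n}} :=
  [set [set p.1; p.2] | p in zip s (rot 1 s)].

Definition cycle_in n (adj : rel 'I_n) (S : {set 'I_n}) (s : seq 'I_n) : bool :=
  cycle_seq adj s && all (fun v => v \in S) s.

Definition at_most_one_cycle_in_balls n (adj : rel 'I_n) (r : nat) : Prop :=
  forall (v : 'I_n) (s1 s2 : seq 'I_n),
    cycle_in adj (ball adj v r) s1 -> cycle_in adj (ball adj v r) s2 ->
    cycle_edges s1 = cycle_edges s2.

Definition cyc_rel n (adj : rel 'I_n) (r : nat) (i j : 'I_n) : Prop :=
  exists s : seq 'I_n, cycle_in adj (ball adj i r :&: ball adj j r) s.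

(* Main.v *)
Require Import Defs.
From mathcomp Require Import all_boot all_order all_algebra.
Import GRing.Theory Num.Theory.
Set Implicit Arguments. Unset Strict Implicit. Unset Printing Implicit Defensive.

Lemma split_first (T : eqType) (A : pred T) (s : seq T) :
  has A s -> exists s0 b s1, [/\ s = s0 ++ b :: s1, A b & ~~ has A s0].
Proof.
elim: s => //= x s IH /orP [Ax | hs].
  by exists [::], x, s.
case: (boolP (A x)) => Ax; first by exists [::], x, s.
have [s0 [b [s1 [-> Ab hn]]]] := IH hs.
by exists (x :: s0), b, s1; rewrite /= (negbTE Ax).
Qed.

Lemma mem_split' (T : eqType) (s : seq T) b : b \in s -> exists s0 s1, s = s0 ++ b :: s1.
Proof. by case/splitPr => s0 s1; exists s0, s1. Qed.

Lemma rev_path_sym (T : eqType) (e : rel T) x p : symmetric e -> path e x p ->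
  path e (last x p) (rev (belast x p)).
Proof.
move=> se h; rewrite rev_path; rewrite (@eq_path _ _ e) //.
Qed.

Lemma last_rev' (T : Type) (x : T) s : last x (rev s) = head x s.
Proof. by case: s => //= y s; rewrite rev_cons last_rcons. Qed.

Lemma empty_eq (T : eqType) (a : T) t : uniq (a :: t) -> last a t = a -> t = [::].
Proof.
case: t => //= y t /andP [ha _] hl.
by move: ha; rewrite -{1}hl mem_last.
Qed.

Lemma last_in (T : eqType) (a : T) s : s != [::] -> last a s \in s.
Proof. by case: s => //= x s _; exact: mem_last. Qed.
Lemma cyc2 n (e : rel 'I_n) (a : 'I_n) (pp qq : seq 'I_n) :
  symmetric e -> path e a pp -> path e a qq -> uniq (a :: pp) -> uniq (a :: qq) ->
  pp != [::] -> head a pp != head a qq -> last a pp = last a qq ->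
  exists c, [/\ cycle_seq e (a :: c), head a c = head a pp, last a c = head a qq
              & {subset c <= pp ++ qq}].
Proof.
move=> se hp hq up uq pn hh hl.
have qn : qq != [::].
  apply/eqP => q0; move: hl; rewrite q0 /= => /(empty_eq up) p0; by rewrite p0 in pn.
have hs : has (mem qq) pp.
  by apply/hasP; exists (last a pp); [exact: last_in | rewrite /= hl last_in].
have [p0 [b [p1 [Ep bq np0]]]] := split_first hs.
have [q0 [q1 Eq]] := mem_split' bq.
exists (p0 ++ b :: rev q0).
move: up uq hp hq hh; rewrite Ep Eq.
rewrite /= !mem_cat !cat_uniq /= !inE !negb_or.
move=> /and5P [/and3P [ap0 ab _] up0 /andP [bp0 _] _ _].
move=> /and5P [/and3P [aq0 _ _] uq0 /andP [bq0 _] _ _].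
rewrite !cat_path /= => /and3P [pp0 epb _] /and3P [pq0 eqb _] hh.
have dq : forall z, z \in p0 -> z \notin q0.
  move=> z zp; have := hasPn np0 z zp; apply: contra => zq.
  have hz : z \in qq by rewrite Eq mem_cat zq.
  exact: hz.
split.
- rewrite /cycle_seq /= size_cat /= size_rev.
  apply/and3P; split.
  + case: (p0) hh => [|? ?]; case: (q0) => [|? ?] //=; rewrite ?eqxx // => _; by rewrite ?addSn ?addnS !ltnS.
  + rewrite mem_cat inE mem_rev negb_or ap0 /= negb_or (negbTE ab) aq0 /= cat_uniq /= mem_rev rev_uniq bq0 up0 uq0 /= andbT negb_or bp0 /=.
    apply/hasPn => z; rewrite mem_rev => zq; apply/negP => zp.
    by move: (dq z zp); rewrite zq.
  + rewrite rcons_cat /= cat_path pp0 /= epb /=.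
    have := rev_path_sym se (_ : path e a (rcons q0 b)).
    rewrite last_rcons belast_rcons rev_cons; apply.
    by rewrite rcons_path pq0 eqb.
- by case: (p0) {Ep np0 ap0 up0 bp0 pp0 epb hh dq}.
- by rewrite last_cat /= last_rev'; case: (q0).
- move=> z; rewrite mem_cat inE mem_rev => /or3P [h|h|h]; rewrite mem_cat ?mem_cat ?inE ?h ?orbT //.
Qed.

Lemma k2 n (e : rel 'I_n) (s : seq 'I_n) : symmetric e -> forall a t,
  path e a s -> path e a t -> uniq (a :: s) -> uniq (a :: t) ->
  last a s = last a t -> s != t ->
  exists c, cycle_seq e c /\ {subset c <= a :: s ++ t}.
Proof.
move=> se; elim: s => [|x p IH] a t hs ht us ut hl hne.
  by move: hl => /= /esym /(empty_eq ut) t0; rewrite t0 in hne.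
case: t ht ut hl hne => [|y q] ht ut hl hne.
  by move: hl => /= /(empty_eq us).
case: (eqVneq x y) => [xy | xy].
  subst y.
  move: hs ht us ut hl hne => /= /andP [_ hs] /andP [_ ht] /andP [_ us] /andP [_ ut] hl hne.
  have hne' : p != q by apply: contra hne => /eqP ->.
  have [c [cc sc]] := IH x q hs ht us ut hl hne'.
  exists c; split => // z /sc; rewrite !(inE, mem_cat).
  by case/or3P => ->; rewrite ?orbT.
have [c [cc _ _ sc]] := cyc2 se hs ht us ut isT xy hl.
exists (a :: c); split => // z; rewrite inE => /orP [/eqP->|/sc]; first by rewrite inE eqxx.
by move=> hz; rewrite inE hz orbT.
Qed.

Lemma mem_zip2 (T U : eqType) (s : seq T) (t : seq U) x y :
  (x, y) \in zip s t -> x \in s /\ y \in t.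
Proof.
elim: s t => [|a s IH] [|b t] //=; rewrite inE => /orP [/eqP [-> ->]|/IH [h1 h2]].
  by rewrite !inE !eqxx.
by rewrite !inE h1 h2 !orbT.
Qed.

Lemma edge_head n (a : 'I_n) c : c != [::] -> [set a; head a c] \in cycle_edges (a :: c).
Proof.
case: c => //= y c _; apply/imsetP; exists (a, y) => //.
by rewrite rot1_cons /= inE eqxx.
Qed.

Lemma edge_mem n (c : seq 'I_n) u v : [set u; v] \in cycle_edges c -> u \in c.
Proof.
case/imsetP => [[x y]] hxy /= E.
have [hx hy] := mem_zip2 hxy.
have : u \in [set x; y] by rewrite -E set21.
by rewrite !inE => /orP [/eqP->|/eqP->] //; rewrite -(mem_rot 1).
Qed.

Lemma zip_pair n (a : 'I_n) c u v : uniq (a :: c) ->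
  (u, v) \in zip (a :: c) (rot 1 (a :: c)) ->
  (u = a -> v = head a c) /\ (v = a -> u = last a c).
Proof.
move=> uc; rewrite rot1_cons => huv.
have sz : size (a :: c) = size (rcons c a) by rewrite size_rcons.
set k := index (u, v) (zip (a :: c) (rcons c a)).
have kl : k < (size c).+1.
  by move: huv; rewrite -index_mem size_zip -sz minnn.
have := nth_index (a, a) huv; rewrite -/k nth_zip // => -[Eu Ev].
have urc : uniq (rcons c a) by rewrite rcons_uniq; move: uc => /= /andP [-> ->].
split.
- move=> ua; have k0 : k = 0.
    apply/eqP; rewrite -(nth_uniq a (s := a :: c)) //; first by rewrite /= Eu ua.
  by rewrite -Ev k0; case: (c).
- move=> va; have kc : k = size c.
    apply/eqP; rewrite -(nth_uniq a (s := rcons c a)) ?size_rcons //.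
    by rewrite Ev va nth_rcons ltnn eqxx.
  by rewrite -Eu kc -[size c]/((size (a :: c)).-1) nth_last.
Qed.

Lemma edge_at n (a z : 'I_n) c : uniq (a :: c) -> z != a ->
  [set a; z] \in cycle_edges (a :: c) -> z = head a c \/ z = last a c.
Proof.
move=> uc za; case/imsetP => [[u v]] huv /= E.
have [h1 h2] := zip_pair uc huv.
have : a \in [set u; v] by rewrite -E set21.
have : z \in [set u; v] by rewrite -E set22.
rewrite !inE => /orP [/eqP zu|/eqP zv] /orP [/eqP au|/eqP av].
- by move: za; rewrite zu au eqxx.
- by right; rewrite zu h2.
- by left; rewrite zv h1.
- by move: za; rewrite zv av eqxx.
Qed.

Definition good_V n (e : rel 'I_n) (V : {set 'I_n}) :=
  forall c1 c2, cycle_in e V c1 -> cycle_in e V c2 -> cycle_edges c1 = cycle_edges c2.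

Lemma cyc_in_V n (e : rel 'I_n) (V : {set 'I_n}) c (S : seq 'I_n) :
  cycle_seq e c -> {subset c <= S} -> {subset S <= V} -> cycle_in e V c.
Proof. by move=> cc cS SV; rewrite /cycle_in cc; apply/allP => z /cS /SV. Qed.

Lemma two_same n (e : rel 'I_n) (V : {set 'I_n}) a x y p1 p2 p3 L :
  symmetric e -> good_V e V -> x != y -> p1 != p2 ->
  path e a (x :: p1) -> path e a (x :: p2) -> path e a (y :: p3) ->
  uniq (a :: x :: p1) -> uniq (a :: x :: p2) -> uniq (a :: y :: p3) ->
  last x p1 = L -> last x p2 = L -> last y p3 = L ->
  {subset a :: x :: p1 <= V} -> {subset a :: x :: p2 <= V} -> {subset a :: y :: p3 <= V} ->
  False.
Proof.
move=> se gV xy p12 h1 h2 h3 u1 u2 u3 l1 l2 l3 V1 V2 V3.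
have [c [cc sc]] : exists c, cycle_seq e c /\ {subset c <= x :: p1 ++ p2}.
  move: h1 h2 u1 u2 => /= /andP [_ h1] /andP [_ h2] /andP [_ u1] /andP [_ u2].
  by apply: k2 => //; rewrite l1 l2.
have yx : y != x by rewrite eq_sym.
have ll : last a (y :: p3) = last a (x :: p1) by rewrite /= l1 l3.
have [c' [cc' hc' _ sc']] := cyc2 se h3 h1 u3 u1 isT yx ll.
have c'n : c' != [::].
  apply/eqP => c0; move: hc' u3; rewrite c0 /= => <-; by rewrite inE eqxx.
have E1 := edge_head a c'n; rewrite hc' /= in E1.
have eq := gV c (a :: c') _ _.
rewrite -eq in E1; last first.
- apply: (cyc_in_V cc' (S := a :: (y :: p3) ++ x :: p1)).
    by move=> z; rewrite inE => /orP [/eqP ->|/sc' hz]; rewrite inE ?eqxx // hz orbT.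
  move=> z; rewrite inE mem_cat => /or3P [/eqP ->|hz|hz].
  + by apply: V1; rewrite inE eqxx.
  + by apply: V3; rewrite inE hz orbT.
  + by apply: V1; rewrite inE hz orbT.
- apply: (cyc_in_V cc sc) => z; rewrite inE mem_cat => /or3P [/eqP ->|hz|hz].
  + by apply: V1; rewrite !inE eqxx orbT.
  + by apply: V1; rewrite !inE hz !orbT.
  + by apply: V2; rewrite !inE hz !orbT.
have := sc _ (edge_mem E1).
rewrite inE mem_cat; move: u1 u2 => /= /andP [+ _] /andP [+ _].
rewrite !inE !negb_or => /andP [h1' h2'] /andP [_ h3'].
by rewrite (negbTE h1') (negbTE h2') (negbTE h3').
Qed.

Lemma all_distinct n (e : rel 'I_n) (V : {set 'I_n}) a x1 x2 x3 p1 p2 p3 L :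
  symmetric e -> good_V e V -> x1 != x2 -> x1 != x3 -> x2 != x3 ->
  path e a (x1 :: p1) -> path e a (x2 :: p2) -> path e a (x3 :: p3) ->
  uniq (a :: x1 :: p1) -> uniq (a :: x2 :: p2) -> uniq (a :: x3 :: p3) ->
  last x1 p1 = L -> last x2 p2 = L -> last x3 p3 = L ->
  {subset a :: x1 :: p1 <= V} -> {subset a :: x2 :: p2 <= V} -> {subset a :: x3 :: p3 <= V} ->
  False.
Proof.
move=> se gV x12 x13 x23 h1 h2 h3 u1 u2 u3 l1 l2 l3 V1 V2 V3.
have ll12 : last a (x1 :: p1) = last a (x2 :: p2) by rewrite /= l1 l2.
have ll31 : last a (x3 :: p3) = last a (x1 :: p1) by rewrite /= l1 l3.
have x31 : x3 != x1 by rewrite eq_sym.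
have [c [cc hc lc sc]] := cyc2 se h1 h2 u1 u2 isT x12 ll12.
have [c' [cc' hc' _ sc']] := cyc2 se h3 h1 u3 u1 isT x31 ll31.
have c'n : c' != [::].
  apply/eqP => c0; move: hc' u3; rewrite c0 /= => <-; by rewrite inE eqxx.
have E1 := edge_head a c'n; rewrite hc' /= in E1.
have sub : forall (pp qq : seq 'I_n) d, {subset a :: pp <= V} -> {subset a :: qq <= V} ->
   {subset d <= pp ++ qq} -> {subset a :: d <= V}.
  move=> pp qq d Vp Vq sd z; rewrite inE => /orP [/eqP ->|/sd]; first by apply: Vp; rewrite inE eqxx.
  by rewrite mem_cat => /orP [hz|hz]; [apply: Vp | apply: Vq]; rewrite inE hz orbT.
have eq := gV (a :: c) (a :: c') (cyc_in_V cc (fun _ h => h) (sub _ _ _ V1 V2 sc))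
                                 (cyc_in_V cc' (fun _ h => h) (sub _ _ _ V3 V1 sc')).
rewrite -eq in E1.
have x3a : x3 != a by move: u3 => /= /andP []; rewrite inE negb_or eq_sym => /andP [].
have [] := edge_at _ x3a E1.
- by case/and3P: cc.
- by rewrite hc => /eqP; rewrite eq_sym (negbTE x13).
- by rewrite lc => /eqP; rewrite eq_sym (negbTE x23).
Qed.

Lemma k3 n (e : rel 'I_n) (V : {set 'I_n}) (s1 : seq 'I_n) :
  symmetric e -> good_V e V -> forall a s2 s3,
  path e a s1 -> path e a s2 -> path e a s3 ->
  uniq (a :: s1) -> uniq (a :: s2) -> uniq (a :: s3) ->
  last a s2 = last a s1 -> last a s3 = last a s1 ->
  {subset a :: s1 <= V} -> {subset a :: s2 <= V} -> {subset a :: s3 <= V} ->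
  s1 != s2 -> s1 != s3 -> s2 != s3 -> False.
Proof.
move=> se gV; elim: s1 => [|x1 p1 IH] a s2 s3 h1 h2 h3 u1 u2 u3 l2 l3 V1 V2 V3 n12 n13 n23.
  by move: l2 => /= /(empty_eq u2) s20; rewrite s20 in n12.
case: s2 h2 u2 l2 V2 n12 n23 => [|x2 p2] h2 u2 l2 V2 n12 n23.
  by move: l2 => /= /esym /(empty_eq u1).
case: s3 h3 u3 l3 V3 n13 n23 => [|x3 p3] h3 u3 l3 V3 n13 n23.
  by move: l3 => /= /esym /(empty_eq u1).
move: l2 l3 => /= l2 l3.
case: (eqVneq x1 x2) => [e12|x12]; case: (eqVneq x1 x3) => [e13|x13].
- subst x2 x3.
  move: h1 h2 h3 u1 u2 u3 => /= /andP [_ h1] /andP [_ h2] /andP [_ h3] /andP [_ u1] /andP [_ u2] /andP [_ u3].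
  have sV : forall (x : 'I_n) p, {subset a :: x :: p <= V} -> {subset x :: p <= V}.
    by move=> x p Vp z hz; apply: Vp; rewrite inE hz orbT.
  apply: (IH x1 p2 p3) => //; try exact: sV.
  + by apply: contra n12 => /eqP ->.
  + by apply: contra n13 => /eqP ->.
  + by apply: contra n23 => /eqP ->.
- subst x2.
  apply: (two_same se gV x13 _ h1 h2 h3 u1 u2 u3 (erefl _) l2 l3 V1 V2 V3).
  by apply: contra n12 => /eqP ->.
- subst x3.
  apply: (two_same se gV x12 _ h1 h3 h2 u1 u3 u2 (erefl _) l3 l2 V1 V3 V2).
  by apply: contra n13 => /eqP ->.
case: (eqVneq x2 x3) => [e23|x23].
- subst x3.
  have x21 : x2 != x1 by rewrite eq_sym.
  apply: (two_same se gV x21 _ h2 h3 h1 u2 u3 u1 (erefl _) (etrans l3 (esym l2)) (esym l2) V2 V3 V1).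
  by apply: contra n23 => /eqP ->.
- exact: (all_distinct se gV x12 x13 x23 h1 h2 h3 u1 u2 u3 (erefl _) l2 l3 V1 V2 V3).
Qed.

Lemma final_arith (d : bool) (m N : nat) (P : Prop) :
  (N <= 2)%N -> (m <= N)%N -> (d -> 0 < m)%N -> (~~ d -> 0 < m -> m < N)%N ->
  ((2 <= N)%N -> P) ->
  let b := ((d%:R - m%:R) : int)%R in
  [/\ (b != 0)%R -> P, (b != 0)%R -> (2 <= N)%N, (`|b| <= 1)%R & (N <= 2)%N].
Proof.
move=> N2 mN hd hnd hP /=.
have h2 : (m <= 2)%N := leq_trans mN N2.
case: d hd hnd => hd hnd.
- have m1 := hd isT.
  case: m h2 m1 mN {hd hnd} => [|[|[|m]]] //= _ _ mN.
  have N2' : (2 <= N)%N := mN.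
  by split => // _; apply: hP.
- case: m h2 mN hd hnd => [|m] h2 mN hd hnd; first by split.
  have := hnd isT isT => lt.
  have N2' : (2 <= N)%N by apply: leq_trans _ lt.
  have := leq_trans lt N2.
  case: m h2 mN hd hnd lt N2' => [|m] //= _ _ _ _ _ N2' _.
  by split => // _; apply: hP.
Qed.

Lemma walk_seq n (adj : rel 'I_n) i (w : seq 'I_n) :
  path adj i w -> walk_len adj i (last i w) (size w).
Proof. by move=> h; apply/existsP; exists (in_tuple w); rewrite /= h eqxx. Qed.

Lemma revwalk n (adj : rel 'I_n) z (t : seq 'I_n) : symmetric adj ->
  path adj z t -> walk_len adj (last z t) z (size t).
Proof.
move=> se h; have := walk_seq (rev_path_sym se h).
rewrite size_rev size_belast last_rev'.
by case: t {h}.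
Qed.

Lemma dist_le_of n (adj : rel 'I_n) i v k r :
  walk_len adj i v k -> (k <= r)%N -> dist_le adj i v r.
Proof. by move=> h kr; apply/existsP; exists (Ordinal (kr : k < r.+1)). Qed.

Definition Pb n (adj : rel 'I_n) (i j : 'I_n) (s : seq 'I_n) :=
  [&& path adj i s, last i s == j & uniq (i :: s)].

Lemma path_in_ball n (adj : rel 'I_n) i j r s : symmetric adj ->
  Pb adj i j s -> (size s <= r)%N -> {subset i :: s <= ball adj i r :&: ball adj j r}.
Proof.
move=> se /and3P [ps /eqP ls us] sr z; rewrite inE => /orP [/eqP ->|zs];
  rewrite inE !inE.
- apply/andP; split.
    by apply: (dist_le_of (k := 0)) => //; exact: (walk_seq (w := [::]) isT).
  by apply: (dist_le_of (k := size s)) sr; rewrite -ls; exact: revwalk.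
- have [s0 [s1 E]] := mem_split' zs.
  move: ps; rewrite E cat_path /= => /and3P [p0 e0 p1].
  apply/andP; split.
    apply: (dist_le_of (k := size (rcons s0 z))).
      have := walk_seq (_ : path adj i (rcons s0 z)); rewrite last_rcons; apply.
      by rewrite rcons_path p0 e0.
    by apply: leq_trans sr; rewrite E size_rcons size_cat /= addnS ltnS leq_addr.
  apply: (dist_le_of (k := size s1)).
    by rewrite -ls E last_cat /=; exact: revwalk.
  by apply: leq_trans sr; rewrite E size_cat /= -addSnnS leq_addl.
Qed.

Lemma walk_to_path n (adj : rel 'I_n) i j k :
  walk_len adj i j k -> exists s, Pb adj i j s && (size s <= k)%N.
Proof.
case/existsP => t /andP [pt /eqP <-].
case: (shortenP pt) => p' pp' up' sub.
exists p'; rewrite /Pb pp' eqxx up' /=.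
rewrite -(size_tuple t); apply: uniq_leq_size sub.
by case/andP: up'.
Qed.

Definition pset n (adj : rel 'I_n) (i j : 'I_n) k :=
  [set t : k.-tuple 'I_n | [&& path adj i t, last i t == j & uniq (i :: t)]].

Fixpoint plist n (adj : rel 'I_n) (i j : 'I_n) m : seq (seq 'I_n) :=
  if m is m'.+1 then plist adj i j m' ++ map val (enum (pset adj i j m')) else [::].

Lemma mem_block n (adj : rel 'I_n) i j k s :
  s \in map val (enum (pset adj i j k)) -> Pb adj i j s && (size s == k).
Proof.
case/mapP => t; rewrite mem_enum inE => ht ->.
by rewrite /Pb ht size_tuple eqxx.
Qed.

Lemma plist_size n (adj : rel 'I_n) i j m :
  size (plist adj i j m) = (\sum_(k < m) npaths adj i j k)%N.
Proof.
elim: m => [|m IH]; first by rewrite big_ord0.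
by rewrite big_ord_recr /= size_cat IH size_map -cardE.
Qed.

Lemma plist_prop n (adj : rel 'I_n) i j m :
  uniq (plist adj i j m) /\ forall s, s \in plist adj i j m -> Pb adj i j s && (size s < m)%N.
Proof.
elim: m => [|m [IHu IHm]] //=.
split.
- rewrite cat_uniq IHu (map_inj_uniq val_inj) ?enum_uniq // andbT /=.
  apply/hasPn => s /mem_block /andP [_ /eqP sz]; apply/negP => /IHm /andP [_].
  by rewrite sz ltnn.
- move=> s; rewrite mem_cat => /orP [/IHm /andP [-> h]|/mem_block /andP [-> /eqP ->]] //.
  by rewrite ltnW.
by rewrite /= ltnSn.
Qed.

Lemma npaths_pos n (adj : rel 'I_n) i j s :
  Pb adj i j s -> (0 < npaths adj i j (size s))%N.
Proof.
move=> h; apply/card_gt0P; exists (in_tuple s); by rewrite inE.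
Qed.

Local Open Scope ring_scope.

Theorem proposition1 (n : nat) (adj : rel 'I_n) (r : nat) :
  simple_graph adj -> (1 <= r)%N ->
  at_most_one_cycle_in_balls adj r ->
  let B := distmx adj r - sawmx adj r in
  forall i j : 'I_n,
    [/\ (B i j != 0 -> cyc_rel adj r i j),
        (B i j != 0 -> (2 <= npaths_le adj i j r)%N),
        `|B i j| <= 1
      & (npaths_le adj i j r <= 2)%N].
Proof.
move=> [se irr] r1 hcyc B i j.
rewrite /B !mxE.
have hN : npaths_le adj i j r = size (plist adj i j r.+1).
  by rewrite plist_size.
have [uL hL] := plist_prop adj i j r.+1.
set L := plist adj i j r.+1 in hN uL hL.
have inball : forall s, s \in L -> {subset i :: s <= ball adj i r :&: ball adj j r}.
  by move=> s /hL /andP [ps sr]; apply: path_in_ball.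
have inballi : forall s, s \in L -> {subset i :: s <= ball adj i r}.
  by move=> s /inball h z /h; rewrite inE => /andP [].
have N2 : (npaths_le adj i j r <= 2)%N.
  rewrite hN leqNgt; apply/negP => h3.
  have m0 : nth [::] L 0 \in L by apply: mem_nth; apply: leq_trans h3.
  have m1 : nth [::] L 1 \in L by apply: mem_nth; apply: leq_trans h3.
  have m2 : nth [::] L 2 \in L by apply: mem_nth.
  have d : forall a b, (a < 3)%N -> (b < 3)%N -> a != b -> nth [::] L a != nth [::] L b.
    by move=> a b a3 b3 ab; rewrite nth_uniq // ?(leq_trans a3) ?(leq_trans b3).
  move: (hL _ m0) (hL _ m1) (hL _ m2) => /andP [/and3P [p0 /eqP l0 u0] _]
    /andP [/and3P [p1 /eqP l1 u1] _] /andP [/and3P [p2 /eqP l2 u2] _].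
  apply: (k3 se (hcyc i) p0 p1 p2 u0 u1 u2 _ _ (inballi _ m0) (inballi _ m1) (inballi _ m2)).
  - by rewrite l0 l1.
  - by rewrite l0 l2.
  - exact: d.
  - exact: d.
  - exact: d.
have cyc : (2 <= npaths_le adj i j r)%N -> cyc_rel adj r i j.
  rewrite hN => h2.
  have m0 : nth [::] L 0 \in L by apply: mem_nth; apply: leq_trans h2.
  have m1 : nth [::] L 1 \in L by apply: mem_nth.
  move: (hL _ m0) (hL _ m1) => /andP [/and3P [p0 /eqP l0 u0] _]
    /andP [/and3P [p1 /eqP l1 u1] _].
  have lq : last i (nth [::] L 0) = last i (nth [::] L 1) by rewrite l0 l1.
  have nq : nth [::] L 0 != nth [::] L 1 by rewrite nth_uniq // (ltnW h2).
  have [c [cc sc]] := k2 se p0 p1 u0 u1 lq nq.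
  exists c; rewrite /cycle_in cc; apply/allP => z /sc; rewrite inE mem_cat => /or3P [h|h|h].
  + by apply: (inball _ m0); rewrite inE h.
  + by apply: (inball _ m0); rewrite inE h orbT.
  + by apply: (inball _ m1); rewrite inE h orbT.
have mN : (npaths adj i j r <= npaths_le adj i j r)%N.
  by rewrite /npaths_le (bigD1 ord_max) //= leq_addr.
have hd : dist_eq adj i j r -> (0 < npaths adj i j r)%N.
  case/andP => w /forallP nw.
  have [s /andP [ps ss]] := walk_to_path w.
  have E : size s = r.
    apply/eqP; rewrite eqn_leq ss /= leqNgt; apply/negP => lt.
    have := nw (Ordinal lt); move: ps => /and3P [ps /eqP ls _].
    by rewrite /= -ls walk_seq.
  by rewrite -E; apply: npaths_pos.
have hnd : ~~ dist_eq adj i j r -> (0 < npaths adj i j r)%N ->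
           (npaths adj i j r < npaths_le adj i j r)%N.
  move=> nd /card_gt0P [t]; rewrite inE => /and3P [pt lt ut].
  have hw : walk_len adj i j r by apply/existsP; exists t; rewrite pt lt.
  move: nd; rewrite /dist_eq hw /= negb_forall => /existsP [k]; rewrite negbK => hk.
  have [s /andP [ps ss]] := walk_to_path hk.
  have sr : (size s < r.+1)%N by apply: leq_trans ss _; apply: ltnW.
  rewrite /npaths_le (bigD1 ord_max) //= (bigD1 (Ordinal sr)) /=; last first.
    by rewrite -val_eqE /= neq_ltn (leq_ltn_trans ss (ltn_ord k)) ?orbT.
  by rewrite -[X in (X < _)%N]addn0 ltn_add2l addn_gt0 npaths_pos.
exact: (final_arith N2 mN hd hnd cyc).
Qed.
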